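(* Let $(E,P,\vartheta)$ be a complete bipolar metric space and let $F\colon E\cup P\to E\cup P$ be a contravariant mapping (i.e. $F(E)\subseteq P$ and $F(P)\subseteq E$) which is a polynomial contraction in the sense that there exist $\pi\in(0,1)$, an integer $\sigma\geq1$ and functions $q_\upsilon\colon E\times P\to[0,\infty)$, $\upsilon=0,\dots,\sigma$, such that $$\sum_{\upsilon=0}^{\sigma} q_\upsilon(Ff,Fe)\,\vartheta^\upsilon(Ff,Fe)\leq \pi\sum_{\upsilon=0}^{\sigma} q_\upsilon(e,f)\,\vartheta^\upsilon(e,f)\quad\text{for all } e\in E,\ f\in P.$$ Assume moreover that (i) $F$ is continuous, and (ii) there exist $\varrho\in\{1,\dots,\sigma\}$ and $Q_\varrho>0$ such that $q_\varrho(e,f)\geq Q_\varrho$ for all $e\in E$, $f\in P$. Then $F$ has a unique fixed point.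
   Context: A bipolar metric space is a triple $(E,P,\vartheta)$ where $E,P$ are nonempty sets and $\vartheta\colon E\times P\to[0,\infty)$ satisfies: (1) for $e\in E$, $f\in P$, $\vartheta(e,f)=0$ iff $e=f$; (2) $\vartheta(e,f)=\vartheta(f,e)$ whenever $e,f\in E\cap P$; (3) $\vartheta(e,f)\leq\vartheta(e,z)+\vartheta(r,z)+\vartheta(r,f)$ for all $e,r\in E$, $z,f\in P$. A sequence $(x_n)$ in $E$ converges to $y\in P$ if $\vartheta(x_n,y)\to0$; a sequence $(y_n)$ in $P$ converges to $x\in E$ if $\vartheta(x,y_n)\to 0$. A bisequence $(x_n,y_n)$ with $x_n\in E$, $y_n\in P$ is convergent if both sequences converge, and Cauchy if for every $\varepsilon>0$ there is $N$ with $\vartheta(x_n,y_m)<\varepsilon$ for all $n,m\geq N$; the space is complete if every Cauchy bisequence is convergent. $F$ is continuous if whenever a sequence $(u_n)$ (in $E$ or in $P$) converges to a point $v$, the sequence $(Fu_n)$ converges to $Fv$. $\vartheta^\upsilon$ denotes the $\upsilon$-th power of $\vartheta$, with $\vartheta^0\equiv1$. A fixed point of $F$ is a point $g$ with $Fg=g$. *)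

(* Defs.v *)
From Stdlib Require Import Reals.
Open Scope R_scope.

(* A bipolar metric space (E,P,d): the two pole sets are predicates E, P on an
   ambient carrier type X (so that E ∩ P makes sense); d is only meaningful on
   E × P. *)
Record bipolar_metric (X : Type) (E P : X -> Prop) (d : X -> X -> R) : Prop := {
  bm_E_nonempty : exists x, E x;
  bm_P_nonempty : exists y, P y;
  bm_nonneg : forall e f, E e -> P f -> 0 <= d e f;
  bm_zero : forall e f, E e -> P f -> (d e f = 0 <-> e = f);
  bm_sym : forall e f, E e -> P e -> E f -> P f -> d e f = d f e;
  bm_tri : forall e r z f, E e -> E r -> P z -> P f ->
             d e f <= d e z + d r z + d r f
}.

Definition left_conv {X : Type} (d : X -> X -> R) (x : nat -> X) (y : X) : Prop :=
  Un_cv (fun n => d (x n) y) 0.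

Definition right_conv {X : Type} (d : X -> X -> R) (y : nat -> X) (x : X) : Prop :=
  Un_cv (fun n => d x (y n)) 0.

Definition cauchy_biseq {X : Type} (d : X -> X -> R) (x y : nat -> X) : Prop :=
  forall eps, eps > 0 -> exists N : nat,
    forall n m, (n >= N)%nat -> (m >= N)%nat -> d (x n) (y m) < eps.

Definition bm_complete {X : Type} (E P : X -> Prop) (d : X -> X -> R) : Prop :=
  forall x y : nat -> X, (forall n, E (x n)) -> (forall n, P (y n)) ->
    cauchy_biseq d x y ->
    (exists a, P a /\ left_conv d x a) /\ (exists b, E b /\ right_conv d y b).

Definition contravariant {X : Type} (E P : X -> Prop) (F : X -> X) : Prop :=
  (forall e, E e -> P (F e)) /\ (forall f, P f -> E (F f)).

Definition bm_continuous {X : Type} (E P : X -> Prop) (d : X -> X -> R)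
    (F : X -> X) : Prop :=
  (forall (u : nat -> X) v, (forall n, E (u n)) -> P v ->
      left_conv d u v -> right_conv d (fun n => F (u n)) (F v)) /\
  (forall (u : nat -> X) v, (forall n, P (u n)) -> E v ->
      right_conv d u v -> left_conv d (fun n => F (u n)) (F v)).

Definition poly_expr {X : Type} (d : X -> X -> R) (q : nat -> X -> X -> R)
    (sigma : nat) (e f : X) : R :=
  sum_f_R0 (fun u => q u e f * d e f ^ u) sigma.

(* Main.v *)
Require Import Defs.
From Stdlib Require Import Reals Lra Lia.
Open Scope R_scope.

Lemma sum_nonneg_le (t : nat -> R) (n : nat) :
  (forall u, (u <= n)%nat -> 0 <= t u) ->
  0 <= sum_f_R0 t n /\ forall k, (k <= n)%nat -> t k <= sum_f_R0 t n.
Proof.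
  induction n as [|n IH]; intros H.
  - simpl. split. apply H; lia. intros k Hk. replace k with 0%nat by lia. lra.
  - destruct IH as [H1 H2]. intros u Hu; apply H; lia.
    simpl. assert (0 <= t (S n)) by (apply H; lia).
    split. lra. intros k Hk. destruct (Nat.eq_dec k (S n)) as [->|Hne]. lra.
    assert (t k <= sum_f_R0 t n) by (apply H2; lia). lra.
Qed.

Lemma pow_strict (x y : R) (n : nat) : 0 <= x < y -> (1 <= n)%nat -> x ^ n < y ^ n.
Proof.
  intros Hxy Hn. induction n as [|n IH]. lia.
  destruct n as [|n]. simpl. lra.
  assert (x ^ S n < y ^ S n) by (apply IH; lia).
  assert (0 <= x ^ S n) by (apply pow_le; lra).
  change (x * x ^ S n < y * y ^ S n).
  assert (0 < y ^ S n) by lra.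
  apply Rle_lt_trans with (x * y ^ S n). apply Rmult_le_compat_l; lra.
  apply Rmult_lt_compat_r; lra.
Qed.

Lemma pow_root_le (x y : R) (n : nat) : 0 <= x -> 0 <= y -> (1 <= n)%nat ->
  x ^ n <= y ^ n -> x <= y.
Proof.
  intros Hx Hy Hn H. destruct (Rle_lt_dec x y) as [|Hlt]. auto.
  assert (y ^ n < x ^ n) by (apply pow_strict; lra|| auto). lra.
Qed.

Lemma div_nn (a b : R) : 0 <= a -> 0 < b -> 0 <= a / b.
Proof. intros. unfold Rdiv. apply Rmult_le_pos; auto. left; apply Rinv_0_lt_compat; auto. Qed.

Definition small (u : nat -> R) := forall eps, eps > 0 -> exists N, forall n, (n >= N)%nat -> u n < eps.

Lemma small_cv (u : nat -> R) : Un_cv u 0 -> small u.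
Proof.
  intros H eps He. destruct (H eps He) as [N HN]. exists N. intros n Hn.
  specialize (HN n Hn). unfold R_dist in HN. rewrite Rminus_0_r in HN.
  apply Rabs_def2 in HN. lra.
Qed.

Lemma small_geom (D r : R) : 0 <= r < 1 -> small (fun n => D * r ^ n).
Proof.
  intros Hr eps He. destruct (Req_dec D 0) as [->|HD].
  - exists 0%nat. intros. lra.
  - assert (0 < Rabs D) by (apply Rabs_pos_lt; auto).
    destruct (pow_lt_1_zero r) with (y := eps / Rabs D) as [N HN].
    rewrite Rabs_right; lra. apply Rdiv_lt_0_compat; lra.
    exists N. intros n Hn. specialize (HN n Hn).
    apply Rle_lt_trans with (Rabs D * Rabs (r ^ n)).
    rewrite <- Rabs_mult. apply Rle_abs.
    apply Rmult_lt_compat_l with (r := Rabs D) in HN; auto.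
    replace (Rabs D * (eps / Rabs D)) with eps in HN by (field; lra). lra.
Qed.

Lemma three_small (x : R) (u v w : nat -> R) : small u -> small v -> small w ->
  (forall n, x <= u n + v n + w n) -> x <= 0.
Proof.
  intros Hu Hv Hw H. destruct (Rle_lt_dec x 0) as [|Hx]; auto.
  destruct (Hu (x/3)) as [N1 H1]. lra.
  destruct (Hv (x/3)) as [N2 H2]. lra.
  destruct (Hw (x/3)) as [N3 H3]. lra.
  specialize (H1 (N1+N2+N3)%nat ltac:(lia)).
  specialize (H2 (N1+N2+N3)%nat ltac:(lia)).
  specialize (H3 (N1+N2+N3)%nat ltac:(lia)).
  specialize (H (N1+N2+N3)%nat). lra.
Qed.

Theorem theorem3p3 (X : Type) (E P : X -> Prop) (d : X -> X -> R) (F : X -> X)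
  (pi : R) (sigma : nat) (q : nat -> X -> X -> R) :
  bipolar_metric X E P d ->
  bm_complete E P d ->
  contravariant E P F ->
  0 < pi < 1 ->
  (1 <= sigma)%nat ->
  (forall u e f, (u <= sigma)%nat -> E e -> P f -> 0 <= q u e f) ->
  (forall e f, E e -> P f ->
     poly_expr d q sigma (F f) (F e) <= pi * poly_expr d q sigma e f) ->
  bm_continuous E P d F ->
  (exists rho : nat, (1 <= rho <= sigma)%nat /\
     exists Q : R, Q > 0 /\ forall e f, E e -> P f -> q rho e f >= Q) ->
  exists! g : X, (E g \/ P g) /\ F g = g.
Proof.
  intros BM Hcomp [FE FP] Hpi Hsig Hq Hcon [Fc1 Fc2] [rho [Hrho [Q [HQ HqQ]]]].
  destruct BM as [[e0 He0] _ Dnn Dz Dsym Dtri].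
  set (Phi := poly_expr d q sigma).
  assert (Phinn : forall e f, E e -> P f -> 0 <= Phi e f /\ Q * d e f ^ rho <= Phi e f).
  { intros e f He Hf. unfold Phi, poly_expr.
    destruct (sum_nonneg_le (fun u => q u e f * d e f ^ u) sigma) as [S1 S2].
    intros u Hu. apply Rmult_le_pos. apply Hq; auto. apply pow_le; auto.
    split; auto. eapply Rle_trans; [|apply (S2 rho); lia]. simpl.
    apply Rmult_le_compat_r. apply pow_le; auto. specialize (HqQ e f He Hf); lra. }
  assert (Hrho1 : (1 <= rho)%nat) by lia.
  assert (Uniq : forall g h, E g -> P g -> E h -> P h -> F g = g -> F h = h -> g = h).
  { intros g h Eg Pg Eh Ph Fg Fh.
    assert (H1 := Hcon h g Eh Pg). rewrite Fg, Fh in H1.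
    assert (H2 := Hcon g h Eg Ph). rewrite Fg, Fh in H2.
    fold Phi in H1, H2.
    destruct (Phinn g h Eg Ph) as [A1 A2]. destruct (Phinn h g Eh Pg) as [B1 B2].
    assert (Phi g h = 0) by nra.
    assert (d g h ^ rho = 0).
    { assert (0 <= d g h ^ rho) by (apply pow_le; auto). nra. }
    apply Dz; auto. destruct (Req_dec (d g h) 0); auto.
    exfalso; eapply pow_nonzero; eauto. }
  set (r := Rpower pi (/ INR rho)).
  assert (Hr0 : 0 < r) by (unfold r, Rpower; apply exp_pos).
  assert (Hrr : r ^ rho = pi).
  { unfold r. rewrite <- Rpower_pow by (unfold Rpower; apply exp_pos).
    rewrite Rpower_mult. rewrite Rinv_l. apply Rpower_1; lra.
    apply not_0_INR; lia. }
  assert (Hr1 : r < 1).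
  { destruct (Rlt_le_dec r 1); auto. assert (1 ^ rho <= r ^ rho) by (apply pow_incr; lra).
    rewrite pow1 in H. lra. }
  set (e := fix e (n : nat) : X := match n with 0 => e0 | S n => F (F (e n)) end).
  set (f := fun n => F (e n)).
  assert (Ee : forall n, E (e n)).
  { induction n; simpl; auto. }
  assert (Pf : forall n, P (f n)) by (intro; unfold f; auto).
  set (Phi0 := Phi (e 0%nat) (f 0%nat)).
  assert (Phi0nn : 0 <= Phi0) by (apply Phinn; auto).
  assert (Step1 : forall k, Phi (e (S k)) (f k) <= pi * Phi (e k) (f k)).
  { intro k. apply (Hcon (e k) (f k)); auto. }
  assert (Step2 : forall k, Phi (e (S k)) (f (S k)) <= pi * Phi (e (S k)) (f k)).
  { intro k. apply (Hcon (e (S k)) (f k)); auto. }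
  assert (BA : forall k, Phi (e k) (f k) <= pi ^ k * Phi0).
  { induction k. rewrite pow_O; unfold Phi0; lra.
    assert (H1 := Step1 k). assert (H2 := Step2 k).
    destruct (Phinn (e k) (f k)) as [N1 _]; auto.
    destruct (Phinn (e (S k)) (f k)) as [N2 _]; auto.
    change (pi ^ S k) with (pi * pi ^ k). assert (pi * Phi (e (S k)) (f k) <= pi * (pi * Phi (e k) (f k))).
    apply Rmult_le_compat_l; lra.
    assert (pi * Phi (e k) (f k) <= Phi (e k) (f k)) by nra.
    assert (pi * (pi * Phi (e k) (f k)) <= pi * Phi (e k) (f k)) by (apply Rmult_le_compat_l; lra).
    assert (pi * Phi (e k) (f k) <= pi * (pi ^ k * Phi0)) by (apply Rmult_le_compat_l; lra).
    lra. }
  assert (BB : forall k, Phi (e (S k)) (f k) <= pi ^ k * Phi0).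
  { intro k. assert (H1 := Step1 k). assert (H2 := BA k).
    destruct (Phinn (e k) (f k)) as [N1 _]; auto. nra. }
  set (D := Phi0 / Q + 1).
  assert (Root : forall x k, 0 <= x -> Q * x ^ rho <= pi ^ k * Phi0 -> x <= D * r ^ k).
  { intros x k Hx H. apply (pow_root_le _ _ rho); auto.
    apply Rmult_le_pos. unfold D. assert (0 <= Phi0 / Q) by (apply div_nn; lra). lra.
    apply pow_le; lra.
    rewrite Rpow_mult_distr. rewrite <- pow_mult, Nat.mul_comm, pow_mult, Hrr.
    assert (x ^ rho <= Phi0 / Q * pi ^ k).
    { unfold Rdiv. apply Rmult_le_reg_l with Q. lra.
      replace (Q * (Phi0 * / Q * pi ^ k)) with (pi ^ k * Phi0) by (field; lra). lra. }
    assert (D <= D ^ rho).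
    { replace D with (D ^ 1) at 1 by (simpl; ring). apply Rle_pow; auto.
      unfold D. assert (0 <= Phi0 / Q) by (apply div_nn; lra). lra. }
    assert (0 <= pi ^ k) by (apply pow_le; lra).
    assert (Phi0 / Q * pi ^ k <= D * pi ^ k) by (apply Rmult_le_compat_r; unfold D; lra).
    assert (D * pi ^ k <= D ^ rho * pi ^ k) by (apply Rmult_le_compat_r; lra).
    lra. }
  assert (Ba : forall k, d (e k) (f k) <= D * r ^ k).
  { intro k. apply Root. auto. destruct (Phinn (e k) (f k)); auto. specialize (BA k); lra. }
  assert (Bb : forall k, d (e (S k)) (f k) <= D * r ^ k).
  { intro k. apply Root. auto. destruct (Phinn (e (S k)) (f k)); auto. specialize (BB k); lra. }
  assert (HD : 0 <= D) by (unfold D; assert (0 <= Phi0 / Q) by (apply div_nn; lra); lra).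
  set (S_ := fun n => 2 * D * r ^ n / (1 - r)).
  assert (SS : forall k, 2 * D * r ^ k + S_ (S k) = S_ k).
  { intro k. unfold S_. simpl. field. lra. }
  assert (Sge : forall k, 0 <= S_ k).
  { intro k. unfold S_. apply div_nn. assert (0 <= r ^ k) by (apply pow_le; lra). nra. lra. }
  assert (rk : forall k, r ^ S k <= r ^ k).
  { intro k. simpl. assert (0 <= r ^ k) by (apply pow_le; lra). nra. }
  assert (C1 : forall j n, d (e n) (f (n + j)%nat) <= S_ n - S_ (n + j)%nat + d (e (n+j)%nat) (f (n + j)%nat)).
  { induction j; intro n.
    - rewrite Nat.add_0_r. lra.
    - specialize (IHj (S n)). replace (S n + j)%nat with (n + S j)%nat in IHj by lia.
      assert (T := Dtri (e n) (e (S n)) (f n) (f (n + S j)%nat) (Ee _) (Ee _) (Pf _) (Pf _)).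
      specialize (Ba n). specialize (Bb n). specialize (SS n). lra. }
  assert (C2 : forall j m, d (e (m + j)%nat) (f m) <= S_ m - S_ (m + j)%nat + d (e (m+j)%nat) (f (m + j)%nat)).
  { induction j; intro m.
    - rewrite Nat.add_0_r. lra.
    - specialize (IHj (S m)). replace (S m + j)%nat with (m + S j)%nat in IHj by lia.
      assert (T := Dtri (e (m + S j)%nat) (e (S m)) (f (S m)) (f m) (Ee _) (Ee _) (Pf _) (Pf _)).
      specialize (Ba (S m)). specialize (Bb m). specialize (SS m). specialize (rk m).
      assert (D * r ^ S m <= D * r ^ m) by (apply Rmult_le_compat_l; lra). lra. }
  assert (Cau : cauchy_biseq d e f).
  { intros eps Heps.
    destruct (small_geom (2 * D / (1 - r) + D) r ltac:(lra) eps Heps) as [N HN].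
    exists N. intros n m Hn Hm.
    assert (Hmono : forall a b, (a <= b)%nat -> r ^ b <= r ^ a).
    { intros a b Hab. induction Hab. lra. specialize (rk m0). lra. }
    assert (Hgen : forall k, (k >= N)%nat -> forall j,
      S_ k - S_ (k + j)%nat + d (e (k+j)%nat) (f (k + j)%nat) < eps).
    { intros k Hk j. specialize (Sge (k + j)%nat). specialize (Ba (k+j)%nat).
      assert (D * r ^ (k + j) <= D * r ^ k) by (apply Rmult_le_compat_l; auto; apply Hmono; lia).
      assert (HN' := HN k Hk).
      assert (S_ k = 2 * D / (1 - r) * r ^ k) by (unfold S_; field; lra). nra. }
    destruct (Nat.le_ge_cases n m) as [Hle|Hle].
    - replace m with (n + (m - n))%nat by lia. eapply Rle_lt_trans. apply C1. apply Hgen; lia.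
    - replace n with (m + (n - m))%nat by lia. eapply Rle_lt_trans. apply C2. apply Hgen; lia. }
  destruct (Hcomp e f Ee Pf Cau) as [[a [Pa La]] [b [Eb Rb]]].
  assert (sa : small (fun n => d (e n) (f n))).
  { intros eps Heps. destruct (small_geom D r ltac:(lra) eps Heps) as [N HN].
    exists N. intros n Hn. specialize (HN n Hn). specialize (Ba n). simpl in *. lra. }
  assert (Hba : b = a).
  { apply Dz; auto. apply Rle_antisym; [|apply Dnn; auto].
    apply (three_small _ (fun n => d b (f n)) (fun n => d (e n) (f n)) (fun n => d (e n) a)).
    apply small_cv; auto. auto. apply small_cv; auto.
    intro n. apply Dtri; auto. }
  subst b.
  assert (RF := Fc1 e a Ee Pa La).
  assert (EFa : E (F a)) by auto.
  assert (Fa : F a = a).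
  { apply Dz; auto. apply Rle_antisym; [|apply Dnn; auto].
    apply (three_small _ (fun n => d (F a) (f n)) (fun n => d (e n) (f n)) (fun n => d (e n) a)).
    apply small_cv; auto. auto. apply small_cv; auto.
    intro n. apply Dtri; auto. }
  exists a. split. split; auto.
  intros g [[Eg|Pg] Fg].
  - symmetry. apply Uniq; auto. rewrite <- Fg; auto.
  - symmetry. apply Uniq; auto. rewrite <- Fg; auto.
Qed.
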